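(* Let $(X,d)$ be a metric space admitting a weak conical bicombing and let $T$ be an isometry of $X$ (a surjective distance-preserving map) with $\inf_{x\in X}d(x,Tx)>0$. Then $T$ has infinite order; in fact $d(x,T^{n}x)\rightarrow\infty$ as $n\to\infty$ for every $x\in X$.
   Context: A weak conical bicombing on $X$ is a map $\sigma:X\times X\times[0,1]\to X$, $(x,y,t)\mapsto\sigma_{xy}(t)$, such that each $\sigma_{xy}$ is a constant speed geodesic from $x$ to $y$ (i.e. $\sigma_{xy}(0)=x$, $\sigma_{xy}(1)=y$, $d(\sigma_{xy}(s),\sigma_{xy}(t))=|s-t|\,d(x,y)$), and $d(\sigma_{xy}(t),\sigma_{xy'}(t))\le t\,d(y,y')$ for all $x,y,y'\in X$ and $t\in[0,1]$. *)

(* Defs.v *)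
From Stdlib Require Import Reals.
Open Scope R_scope.

Definition is_metric {X : Type} (d : X -> X -> R) : Prop :=
  (forall x y, 0 <= d x y) /\
  (forall x y, d x y = 0 <-> x = y) /\
  (forall x y, d x y = d y x) /\
  (forall x y z, d x z <= d x y + d y z).

(* sigma x y t = sigma_{xy}(t); only values for t in [0,1] matter. *)
Definition weak_conical_bicombing {X : Type} (d : X -> X -> R)
  (sigma : X -> X -> R -> X) : Prop :=
  (forall x y, sigma x y 0 = x) /\
  (forall x y, sigma x y 1 = y) /\
  (forall x y s t, 0 <= s <= 1 -> 0 <= t <= 1 ->
     d (sigma x y s) (sigma x y t) = Rabs (s - t) * d x y) /\
  (forall x y y' t, 0 <= t <= 1 ->
     d (sigma x y t) (sigma x y' t) <= t * d y y').

Definition admits_weak_conical_bicombing {X : Type} (d : X -> X -> R) : Prop :=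
  exists sigma : X -> X -> R -> X, weak_conical_bicombing d sigma.

Definition isometry {X : Type} (d : X -> X -> R) (T : X -> X) : Prop :=
  (forall y, exists x, T x = y) /\ (forall x y, d (T x) (T y) = d x y).

(* Main.v *)
Require Import Defs.
From Stdlib Require Import Reals.
From Stdlib Require Import Lra Lia ZArith IndefiniteDescription.
Open Scope R_scope.

Lemma iter_iso (X : Type) (d : X -> X -> R) (T : X -> X) :
  (forall x y, d (T x) (T y) = d x y) ->
  forall n a b, d (Nat.iter n T a) (Nat.iter n T b) = d a b.
Proof. intros H n; induction n; intros a b; simpl; auto. rewrite H; auto. Qed.

Lemma conv_lemma (X : Type) (d : X -> X -> R) sigma :
  is_metric d -> weak_conical_bicombing d sigma ->
  forall p x w t, 0 <= t <= 1 ->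
  d p (sigma x w t) <= (1 - t) * d p x + t * d p w.
Proof.
  intros [Hp [Hz [Hs Ht]]] [H0 [H1 [Hg Hc]]] p x w t Hti.
  eapply Rle_trans. apply (Ht _ (sigma x p t)).
  assert (E : d p (sigma x p t) = (1 - t) * d p x).
  { rewrite Hs. rewrite <- (H1 x p) at 2. rewrite Hg by lra.
    rewrite Rabs_left1 by lra. rewrite Hs. ring. }
  rewrite E. apply Rplus_le_compat_l.
  eapply Rle_trans. apply Hc. exact Hti. rewrite Hs. lra.
Qed.

Lemma key (X : Type) (d : X -> X -> R) (T : X -> X) sigma eps a C x :
  is_metric d -> weak_conical_bicombing d sigma -> isometry d T ->
  0 < eps -> (forall z, eps <= d z (T z)) -> 0 <= a -> 0 <= C ->
  (forall m, d x (Nat.iter m T x) <= a * INR m + C) -> eps <= a.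
Proof.
  intros Hm Hb [Hsurj Hiso] Heps Hdisp Ha HC HD.
  pose proof (conv_lemma X d sigma Hm Hb) as Hconv.
  destruct Hm as [Hp [Hz [Hs Ht]]].
  destruct Hb as [H0 [H1 [Hg Hc]]].
  destruct (Rlt_or_le a eps) as [Hlt|]; [|assumption]. exfalso.
  assert (Tinv : {g : X -> X | forall y, T (g y) = y}).
  { exists (fun y => proj1_sig (constructive_indefinite_description _ (Hsurj y))).
    intro y; exact (proj2_sig (constructive_indefinite_description _ (Hsurj y))). }
  destruct Tinv as [g Hgi].
  set (B := fun j => Nat.iter j g x).
  assert (HBS : forall j, T (B (S j)) = B j).
  { intro j. unfold B. simpl. apply Hgi. }
  assert (HBx : forall j, Nat.iter j T (B j) = x).
  { induction j. reflexivity.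
    rewrite Nat.iter_succ_r, HBS. exact IHj. }
  assert (HBd : forall j, d (B j) x = d x (Nat.iter j T x)).
  { intro j. rewrite <- (iter_iso X d T Hiso j). rewrite HBx. reflexivity. }
  set (u := (eps - a) / (2 * (C + eps + 1))).
  assert (Hu : u * (2 * (C + eps + 1)) = eps - a).
  { unfold u. field. lra. }
  assert (Hu0 : 0 < u).
  { unfold u. apply Rdiv_lt_0_compat; lra. }
  assert (Hu1 : u < 1/2) by nra.
  set (t := 1 - u).
  assert (Hti : 0 <= t <= 1) by (unfold t; lra).
  set (F := fun y => sigma x (T y) t).
  set (y := fun k => Nat.iter k F x).
  assert (HyS : forall k, y (S k) = sigma x (T (y k)) t) by reflexivity.
  set (q := a * t / u).
  assert (Hq0 : 0 <= q).
  { unfold q, Rdiv. apply Rmult_le_pos. apply Rmult_le_pos; lra.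
    left; apply Rinv_0_lt_compat; lra. }
  assert (Hqu : q * u = a * t) by (unfold q; field; lra).
  assert (Claim1 : forall k j, d (B j) (y k) <= a * INR j + C + q).
  { induction k; intro j.
    - simpl. change (Nat.iter 0 F x) with x. rewrite HBd. specialize (HD j). lra.
    - rewrite HyS. eapply Rle_trans. apply Hconv. exact Hti.
      rewrite <- (HBS j) at 2. rewrite Hiso.
      specialize (IHk (S j)). rewrite S_INR in IHk.
      pose proof (HD j) as HDj. rewrite <- HBd in HDj.
      assert (E : u * (a * INR j + C) + t * (a * (INR j + 1) + C + q)
                  = a * INR j + C + q).
      { unfold t in *. nra. }
      fold u. change (1 - t) with (1 - (1 - u)).
      replace (1 - (1 - u)) with u by ring.
      rewrite <- E. apply Rplus_le_compat.
      + apply Rmult_le_compat_l; lra.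
      + apply Rmult_le_compat_l; lra. }
  set (c := d (y 0%nat) (y 1%nat)).
  assert (Claim2 : forall k, d (y k) (y (S k)) <= t ^ k * c).
  { induction k.
    - rewrite pow_O, Rmult_1_l. apply Rle_refl.
    - rewrite (HyS (S k)). rewrite (HyS k) at 1. eapply Rle_trans. apply Hc. exact Hti.
      rewrite Hiso. simpl pow. assert (0 <= t) by lra. nra. }
  assert (Hc0 : 0 <= c) by apply Hp.
  assert (Hta : Rabs t < 1).
  { rewrite Rabs_right; unfold t; lra. }
  destruct (pow_lt_1_zero t Hta ((eps - a) / (2 * (c + 1)))) as [N HN].
  { apply Rdiv_lt_0_compat; lra. }
  specialize (HN N (le_n N)).
  rewrite Rabs_right in HN by (apply Rle_ge, pow_le; lra).
  set (r := t ^ N) in *.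
  assert (Hr0 : 0 <= r) by (apply pow_le; lra).
  assert (Hr : r * (2 * (c + 1)) < eps - a).
  { apply (Rmult_lt_compat_r (2 * (c + 1))) in HN; [|lra].
    unfold Rdiv in HN. rewrite Rmult_assoc, Rinv_l in HN by lra. lra. }
  assert (HA : d (y (S N)) (T (y N)) = u * d x (T (y N))).
  { rewrite HyS. rewrite <- (H1 x (T (y N))) at 2. rewrite Hg by lra.
    rewrite Rabs_left1 by (unfold t; lra). unfold t; ring. }
  assert (HB1 : d x (T (y N)) <= a + C + q).
  { replace x with (T (B 1%nat)) at 1 by (rewrite HBS; reflexivity). rewrite Hiso. specialize (Claim1 N 1%nat).
    simpl INR in Claim1. lra. }
  pose proof (Hdisp (y N)) as Hd.
  pose proof (Ht (y N) (y (S N)) (T (y N))) as Htr.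
  pose proof (Claim2 N) as C2. fold r in C2.
  assert (u * d x (T (y N)) <= u * (a + C + q)) by (apply Rmult_le_compat_l; lra).
  assert (u * C * 2 < eps - a) by nra.
  nra.
Qed.

Lemma orbit_bound (X : Type) (d : X -> X -> R) (T : X -> X) x n :
  is_metric d -> (forall x y, d (T x) (T y) = d x y) -> (n >= 1)%nat ->
  forall m, d x (Nat.iter m T x) <=
     (d x (Nat.iter n T x) / INR n) * INR m + INR n * d x (T x).
Proof.
  intros [Hp [Hz [Hs Ht]]] Hiso Hn.
  set (D := fun m => d x (Nat.iter m T x)).
  assert (Hadd : forall p k, D (p + k)%nat <= D p + D k).
  { intros p k. unfold D. rewrite Nat.iter_add.
    eapply Rle_trans. apply (Ht _ (Nat.iter p T x)).
    rewrite (iter_iso X d T Hiso). lra. }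
  assert (Hlin : forall m, D m <= INR m * D 1%nat).
  { induction m. simpl. unfold D. simpl. rewrite (proj2 (Hz x x) eq_refl). lra.
    replace (S m) with (m + 1)%nat by lia. rewrite plus_INR.
    eapply Rle_trans. apply Hadd. simpl INR. lra. }
  assert (Hq : forall qq r, D (qq * n + r)%nat <= INR qq * D n + D r).
  { induction qq; intro r.
    - simpl. lra.
    - replace (S qq * n + r)%nat with (n + (qq * n + r))%nat by lia.
      eapply Rle_trans. apply Hadd. rewrite S_INR. specialize (IHqq r). lra. }
  intro m. change (D m <= D n / INR n * INR m + INR n * D 1%nat).
  assert (HnR : 0 < INR n) by (apply lt_0_INR; lia).
  assert (HD1 : 0 <= D 1%nat) by apply Hp.
  assert (HDn : 0 <= D n) by apply Hp.
  pose proof (Nat.div_mod m n ltac:(lia)) as Hdm.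
  pose proof (Nat.mod_upper_bound m n ltac:(lia)) as Hmb.
  set (qq := (m / n)%nat) in *. set (r := (m mod n)%nat) in *.
  assert (Hm : m = (qq * n + r)%nat) by lia.
  rewrite Hm. eapply Rle_trans. apply Hq.
  assert (INR r <= INR n) by (apply le_INR; lia).
  assert (Dr : D r <= INR n * D 1%nat).
  { eapply Rle_trans. apply Hlin. apply Rmult_le_compat_r; lra. }
  assert (E : INR qq * D n = D n / INR n * INR (qq * n)%nat).
  { rewrite mult_INR. field. lra. }
  rewrite E. rewrite plus_INR.
  assert (0 <= D n / INR n) by (unfold Rdiv; apply Rmult_le_pos; [lra | left; apply Rinv_0_lt_compat; lra]).
  assert (0 <= INR r) by apply pos_INR.
  nra.
Qed.

Theorem corollary2 (X : Type) (d : X -> X -> R) (T : X -> X) :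
  inhabited X ->
  is_metric d ->
  admits_weak_conical_bicombing d ->
  isometry d T ->
  (exists eps, 0 < eps /\ forall x, eps <= d x (T x)) ->
  (forall n : nat, (n >= 1)%nat -> exists x, Nat.iter n T x <> x) /\
  (forall x : X, forall M : R, exists N : nat,
     forall n : nat, (n >= N)%nat -> M <= d x (Nat.iter n T x)).
Proof.
  intros [x0] Hm [sigma Hb] Hi [eps [Heps Hdisp]].
  assert (Main : forall x n, (n >= 1)%nat -> INR n * eps <= d x (Nat.iter n T x)).
  { intros x n Hn.
    assert (HnR : 0 < INR n) by (apply lt_0_INR; lia).
    pose proof (orbit_bound X d T x n Hm (proj2 Hi) Hn) as Hob.
    assert (Hk := key X d T sigma eps (d x (Nat.iter n T x) / INR n)
                   (INR n * d x (T x)) x Hm Hb Hi Heps Hdisp).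
    destruct Hm as [Hp _].
    assert (0 <= d x (Nat.iter n T x) / INR n)
      by (unfold Rdiv; apply Rmult_le_pos; [apply Hp | left; apply Rinv_0_lt_compat; lra]).
    assert (0 <= INR n * d x (T x)) by (apply Rmult_le_pos; [lra| apply Hp]).
    specialize (Hk H H0 Hob).
    apply (Rmult_le_compat_l (INR n)) in Hk; [|lra].
    replace (INR n * (d x (Nat.iter n T x) / INR n)) with (d x (Nat.iter n T x)) in Hk
      by (field; lra). exact Hk. }
  split.
  - intros n Hn. exists x0. intro E. pose proof (Main x0 n Hn) as H.
    rewrite E in H. destruct Hm as [_ [Hz _]].
    rewrite (proj2 (Hz x0 x0) eq_refl) in H.
    assert (0 < INR n) by (apply lt_0_INR; lia). nra.
  - intros x M. set (z := up (M / eps)).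
    destruct (archimed (M / eps)) as [Hz1 _]. fold z in Hz1.
    exists (S (Z.to_nat z)). intros n Hn.
    assert (HzN : IZR z <= INR (Z.to_nat z)).
    { destruct (Z_le_gt_dec 0 z).
      - rewrite INR_IZR_INZ, Z2Nat.id by lia. lra.
      - assert (IZR z < 0) by (apply IZR_lt; lia). pose proof (pos_INR (Z.to_nat z)). lra. }
    assert (INR (Z.to_nat z) <= INR n) by (apply le_INR; lia).
    pose proof (Main x n ltac:(lia)).
    assert (M / eps < INR n) by lra.
    assert (M = (M / eps) * eps) by (field; lra).
    nra.
Qed.
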